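(* In the reset-button collector, let $K_n$ be a random variable with $\mathbb P(K_n=k)=\rho_nq_n^k$ for $k=0,1,2,\dots$ (the number of standard draws before the next reset). Let $(C_{n,r},K_{n,r})_{r\ge1}$ be independent copies of $(C_n,K_n)$, with $C_{n,r}$ independent of $K_{n,r}$ for each $r$, and let $G_n:=\inf\{r\ge1:C_{n,r}\le K_{n,r}\}$. Then $G_n$ is geometric on $\{1,2,\dots\}$ with success probability $s_n:=\mathbb Eq_n^{C_n}$, and \[T_n\stackrel d=\sum_{r=1}^{G_n-1}(K_{n,r}+1)+C_{n,G_n},\] where the sum is empty if $G_n=1$.
   Context: Reset-button collector: fix $n\ge1$. There are standard coupons $1,\dots,n$ and a reset coupon. At each discrete time $t=1,2,\dots$ one coupon is sampled independently: the reset coupon with probability $\rho_n\in(0,1)$, standard coupon $i$ with probability $p_{i,n}>0$, where $\sum_ip_{i,n}=q_n:=1-\rho_n$. Starting from the empty collection, drawn standard coupons are added; a reset empties the collection and collecting continues. $T_n$ is the first time all $n$ standard coupons are present. $C_n$ is the ordinary coupon collector completion time (number of i.i.d. draws until all types seen) with type probabilities $p_{i,n}/q_n$. *)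

(* Defs.v *)
From HB Require Import structures.
From mathcomp Require Import all_boot all_order all_algebra.
From mathcomp Require Import all_classical all_reals all_analysis.
Set Implicit Arguments. Unset Strict Implicit. Unset Printing Implicit Defensive.
Import Order.TTheory GRing.Theory Num.Theory.
Local Open Scope classical_set_scope.
Local Open Scope ring_scope.

(* A draw is an element of [option 'I_n]: [None] is the reset coupon,
   [Some i] is standard coupon i. *)
Definition reset_step n (S : {set 'I_n}) (x : option 'I_n) : {set 'I_n} :=
  if x is Some i then i |: S else finset.set0.

Definition reset_collection n (s : seq (option 'I_n)) : {set 'I_n} :=
  foldl (@reset_step n) finset.set0 s.

(* the word s of draws is such that the collection is complete after all of
   s and after no strict prefix of s, i.e. T_n = size s on this word *)
Definition reset_completes_exactly n (s : seq (option 'I_n)) : bool :=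
  (reset_collection s == finset.setT) &&
  all (fun j => reset_collection (take j s) != finset.setT) (iota 0 (size s)).

Definition reset_draw_prob (R : realType) n (rho : R) (p : 'I_n -> R)
  (x : option 'I_n) : R := if x is Some i then p i else rho.

Definition T_law (R : realType) n (rho : R) (p : 'I_n -> R) (t : nat) : R :=
  \sum_(w : t.-tuple (option 'I_n) | reset_completes_exactly w)
     \prod_(x <- w) reset_draw_prob rho p x.

Definition coupon_collection n (s : seq 'I_n) : {set 'I_n} :=
  foldl (fun S i => i |: S) finset.set0 s.

Definition coupon_completes_exactly n (s : seq 'I_n) : bool :=
  (coupon_collection s == finset.setT) &&
  all (fun j => coupon_collection (take j s) != finset.setT) (iota 0 (size s)).

Definition C_law (R : realType) n (q : R) (p : 'I_n -> R) (c : nat) : R :=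
  \sum_(w : c.-tuple 'I_n | coupon_completes_exactly w)
     \prod_(i <- w) (p i / q).

Section indep.
Context d (T : measurableType d) (R : realType) (P : probability T R).
Local Open Scope ereal_scope.

Definition pairs_mutually_independent (C K : nat -> T -> nat) : Prop :=
  forall (s : seq nat) (A : nat -> set (nat * nat)),
    uniq s -> all (fun r => (0 < r)%N) s ->
    P (\bigcap_(r in [set r | r \in s]) ((fun w => (C r w, K r w)) @^-1` A r))
    = \prod_(r <- s) P ((fun w => (C r w, K r w)) @^-1` A r).

Definition indep2 (X Y : T -> nat) : Prop :=
  forall A B : set nat,
    P (X @^-1` A `&` Y @^-1` B) = P (X @^-1` A) * P (Y @^-1` B).
End indep.

(* G_n = inf { r >= 1 : C_r <= K_r }, with None standing for +oo *)
Definition first_success (T : Type) (C K : nat -> T -> nat) (w : T)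
  : option nat :=
  match pselect (exists r, (0 < r)%N && (C r w <= K r w)%N) with
  | left H => Some (ex_minn H)
  | right _ => None
  end.

Definition reset_decomposition (T : Type) (C K : nat -> T -> nat) (w : T)
  : option nat :=
  omap (fun g => (\sum_(1 <= r < g) (K r w).+1 + C g w)%N)
       (first_success C K w).

(* Main.v *)
Require Import Defs.
From HB Require Import structures.
From mathcomp Require Import all_boot all_order all_algebra.
From mathcomp Require Import all_classical all_reals all_analysis.
From mathcomp Require Import ring lra zify.
Import Order.TTheory GRing.Theory Num.Theory.
Local Open Scope classical_set_scope.
Local Open Scope ring_scope.
Set Implicit Arguments. Unset Strict Implicit. Unset Printing Implicit Defensive.
Section Comb.
Variable R : realType.

Lemma sum_tuple_cons (X : finType) t (F : seq X -> R) :
  \sum_(w : t.+1.-tuple X) F w = \sum_(x : X) \sum_(w : t.-tuple X) F (x :: w).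
Proof.
rewrite pair_big /=.
rewrite (reindex (fun p : X * t.-tuple X => [tuple of p.1 :: p.2])) //=.
exists (fun w : t.+1.-tuple X => (thead w, [tuple of behead w])).
  by move=> [x w] _ /=; congr pair; apply: val_inj.
by move=> w _; apply: val_inj => /=; rewrite [in RHS](tuple_eta w).
Qed.

Lemma sum_tuple0 (X : finType) (F : seq X -> R) :
  \sum_(w : 0.-tuple X) F w = F [::].
Proof.
rewrite (big_pred1 [tuple]) // => w /=; apply/esym/eqP; exact: tuple0.
Qed.

Lemma sum_option (I : finType) (F : option I -> R) :
  \sum_(x : option I) F x = F None + \sum_(i : I) F (Some i).
Proof.
rewrite (bigD1 None) //=; congr (_ + _).
rewrite (reindex_omap Some id) //=.
  by apply: eq_bigl => i; rewrite eqxx.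
by case.
Qed.

Lemma sum_tuple_prod (X : finType) t (G : seq X -> bool) (f : X -> R) :
  \sum_(w : t.+1.-tuple X | G w) \prod_(x <- w) f x =
  \sum_(x : X) f x * \sum_(w : t.-tuple X | G (x :: w)) \prod_(y <- w) f y.
Proof.
rewrite big_mkcond (@sum_tuple_cons _ t (fun w => if G w then \prod_(x <- w) f x else 0)); apply: eq_bigr => x _.
rewrite mulr_sumr [RHS]big_mkcond. apply: eq_bigr => w _ /=.
by case: ifP => _; rewrite ?big_cons ?mulr0.
Qed.

Lemma sum_tuple_prod0 (X : finType) (G : seq X -> bool) (f : X -> R) :
  \sum_(w : 0.-tuple X | G w) \prod_(x <- w) f x = (G [::])%:R.
Proof.
by rewrite big_mkcond (@sum_tuple0 _ (fun w => if G w then \prod_(x <- w) f x else 0)) /=; case: (G [::]); rewrite ?big_nil.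
Qed.
End Comb.
Section Proc.
Variables (I : finType) (X : Type) (f : {set I} -> X -> {set I}).

Definition coll (S : {set I}) (w : seq X) := foldl f S w.
Definition comp (S : {set I}) (w : seq X) : bool :=
  (coll S w == finset.setT) && all (fun j => coll S (take j w) != finset.setT) (iota 0 (size w)).

Lemma all_iotaS (P : pred nat) m k :
  all P (iota m.+1 k) = all (fun j => P j.+1) (iota m k).
Proof. by elim: k m => [|k IH] m //=; rewrite IH. Qed.

Lemma comp_cons S x w : comp S (x :: w) = (S != finset.setT) && comp (f S x) w.
Proof.
rewrite /comp /= all_iotaS /=.
by rewrite andbCA.
Qed.

Lemma comp_nil S : comp S [::] = (S == finset.setT).
Proof. by rewrite /comp /= andbT. Qed.
End Proc.

Lemma reset_compE n (w : seq (option 'I_n)) :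
  reset_completes_exactly w = comp (@reset_step n) finset.set0 w.
Proof. by []. Qed.

Lemma coupon_compE n (w : seq 'I_n) :
  coupon_completes_exactly w = comp (fun S i => i |: S) finset.set0 w.
Proof. by []. Qed.
Section Sums.
Variables (R : realType) (n : nat) (rho : R) (p : 'I_n -> R).

Definition cstep (S : {set 'I_n}) (i : 'I_n) := i |: S.
Definition rw := reset_draw_prob rho p.

Definition Wf S t := \sum_(w : t.-tuple (option 'I_n) | comp (@reset_step n) S w)
   \prod_(x <- w) rw x.
Definition Bf S t := \sum_(w : t.-tuple 'I_n | comp cstep S w) \prod_(i <- w) p i.
Definition Nf S k := \sum_(w : k.-tuple 'I_n | coll cstep S w != finset.setT)
   \prod_(i <- w) p i.

Lemma Wf0 S : Wf S 0 = (S == finset.setT)%:R.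
Proof. by rewrite /Wf sum_tuple_prod0 comp_nil. Qed.

Lemma WfS S t : Wf S t.+1 =
  (S != finset.setT)%:R * (rho * Wf finset.set0 t + \sum_i p i * Wf (i |: S) t).
Proof.
rewrite /Wf sum_tuple_prod.
under eq_bigr => x _ do under eq_bigl => w do rewrite comp_cons.
case: (S != finset.setT); last first.
  by rewrite mul0r big1 // => x _; rewrite big_pred0 ?mulr0.
rewrite mul1r sum_option /=; congr (_ + _).
Qed.

Lemma Bf0 S : Bf S 0 = (S == finset.setT)%:R.
Proof. by rewrite /Bf sum_tuple_prod0 comp_nil. Qed.

Lemma BfS S t : Bf S t.+1 =
  (S != finset.setT)%:R * (\sum_i p i * Bf (i |: S) t).
Proof.
rewrite /Bf sum_tuple_prod.
under eq_bigr => x _ do under eq_bigl => w do rewrite comp_cons.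
case: (S != finset.setT); last first.
  by rewrite mul0r big1 // => x _; rewrite big_pred0 ?mulr0.
by rewrite mul1r.
Qed.

Lemma Nf0 S : Nf S 0 = (S != finset.setT)%:R.
Proof. by rewrite /Nf (@sum_tuple_prod0 _ _ (fun w => coll cstep S w != finset.setT)). Qed.

Lemma NfS S k : Nf S k.+1 = \sum_i p i * Nf (i |: S) k.
Proof. by rewrite /Nf (@sum_tuple_prod _ _ _ (fun w => coll cstep S w != finset.setT)). Qed.

Lemma collT (w : seq 'I_n) : coll cstep finset.setT w = finset.setT.
Proof. by elim: w => //= i w; rewrite /coll /= /cstep finset.setUT. Qed.

Lemma NfT k : Nf finset.setT k = 0.
Proof. by rewrite /Nf big_pred0 // => w; rewrite collT eqxx. Qed.

End Sums.
Section D.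
Variables (R : realType) (n : nat) (rho : R) (p : 'I_n -> R).
Local Notation W := (Wf rho p).
Local Notation B := (Bf p).
Local Notation N := (Nf p).

Lemma D1 t S : W S t = B S t + \sum_(k < t) rho * N S k * W finset.set0 (t - k.+1).
Proof.
elim: t S => [|t IH] S.
  by rewrite Wf0 Bf0 big_ord0 addr0.
rewrite WfS BfS.
case: (S =P finset.setT) => [->|nS].
  rewrite !mul0r add0r big1 // => k _; by rewrite NfT mulr0 mul0r.
rewrite !mul1r big_ord_recl /= Nf0.
have -> : (S != finset.setT)%:R = 1 :> R by case: eqP nS.
rewrite subn1 /=.
under eq_bigr do rewrite IH mulrDr.
rewrite big_split /=.
under [X in _ = _ + (_ + X)]eq_bigr => k _ do
  rewrite /bump /= NfS mulr_sumr mulr_suml subSS.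
rewrite exchange_big /=.
under [X in _ = _ + (_ + X)]eq_bigr => i _ do
  (under eq_bigr => k _ do rewrite (mulrA rho (p i)) (mulrC rho (p i)) -!mulrA; rewrite -mulr_sumr).
under [X in _ + (_ + X) = _]eq_bigr => i _ do (rewrite mulr_sumr; under eq_bigr => k _ do rewrite !mulrA).
rewrite mulr1.
rewrite addrCA; congr (_ + (_ + _)); apply: eq_bigr => i _.
by rewrite mulr_sumr; apply: eq_bigr => k _; rewrite add1n !mulrA.
Qed.
End D.
Section D2.
Variables (R : realType) (n : nat) (p : 'I_n -> R).
Local Notation B := (Bf p).
Local Notation N := (Nf p).
Local Notation q := (\sum_(i < n) p i).

Lemma D2 k S : N S k + \sum_(c < k.+1) B S c * q ^+ (k - c) = q ^+ k.
Proof.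
elim: k S => [|k IH] S.
  by rewrite big_ord1 Nf0 Bf0 expr0 mulr1; case: (_ == _); rewrite /= ?addr0 ?add0r.
rewrite big_ord_recl /= Bf0.
case: (S =P finset.setT) => [->|nS].
  rewrite NfT add0r mul1r subn0 [X in _ + X]big1 ?addr0 // => c _.
  by rewrite /bump /= BfS; case: eqP => // _; rewrite !mul0r.
rewrite NfS mul0r add0r.
rewrite exprS mulr_suml.
under [RHS]eq_bigr => i _ do rewrite -(IH (i |: S)) mulrDr.
rewrite big_split /=; congr (_ + _).
have S1 : (S != finset.setT)%:R = 1 :> R by case: eqP nS.
under eq_bigr => c _ do rewrite BfS /bump /= subSS S1 mul1r mulr_suml.
rewrite exchange_big /=; apply: eq_bigr => i _.
by rewrite mulr_sumr; apply: eq_bigr => c _; rewrite mulrA.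
Qed.
End D2.
Lemma prod_div (R : realType) n (p : 'I_n -> R) (q : R) (w : seq 'I_n) :
  \prod_(i <- w) (p i / q) = (\prod_(i <- w) p i) * q^-1 ^+ size w.
Proof.
elim: w => [|i w IH]; first by rewrite !big_nil expr0 mulr1.
by rewrite !big_cons IH /= exprS mulrACA.
Qed.

Lemma D3 (R : realType) n (p : 'I_n -> R) (q : R) c :
  q != 0 -> C_law q p c = Bf p finset.set0 c / q ^+ c.
Proof.
move=> q0; rewrite /C_law /Bf mulr_suml -exprVn.
apply: eq_big => [w|w _]; first by [].
by rewrite prod_div size_tuple.
Qed.

Lemma T_law_rec (R : realType) n (rho : R) (p : 'I_n -> R) t :
  \sum_i p i = 1 - rho -> 1 - rho != 0 ->
  T_law rho p t = (1 - rho) ^+ t * C_law (1 - rho) p t +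
   \sum_(k < t) rho * ((1 - rho) ^+ k * (1 - \sum_(c < k.+1) C_law (1 - rho) p c))
      * T_law rho p (t - k.+1).
Proof.
move=> hq q0.
have -> : T_law rho p t = Wf rho p finset.set0 t by [].
rewrite D1 D3 // mulrC divfK ?expf_neq0 //; congr (_ + _).
apply: eq_bigr => k _; congr (_ * _ * _).
have := D2 p k finset.set0; rewrite hq => E.
have -> : Nf p finset.set0 k = (1 - rho) ^+ k - \sum_(c < k.+1) Bf p finset.set0 c * (1 - rho) ^+ (k - c).
  by rewrite -E addrK.
rewrite mulrBr mulr1 mulr_sumr; congr (_ - _); apply: eq_bigr => c _.
rewrite D3 //.
have ck : (c <= k)%N by rewrite -ltnS.
have -> : (1 - rho) ^+ k = (1 - rho) ^+ c * (1 - rho) ^+ (k - c) by rewrite -exprD subnKC.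
have qc : (1 - rho) ^+ c != 0 by rewrite expf_neq0.
by field.
Qed.
Section Det.
Variables (T : Type) (c k : nat -> T -> nat) (w : T).

Lemma fs_some g : first_success c k w = Some g ->
  [/\ (0 < g)%N, (c g w <= k g w)%N &
      forall r, (0 < r)%N -> (r < g)%N -> (k r w < c r w)%N].
Proof.
rewrite /first_success; case: pselect => // H [<-].
case: ex_minnP => m /andP[m0 hm] minm; split => // r r0 rm.
rewrite ltnNge; apply/negP => hr.
by have := minm r; rewrite r0 hr => /(_ isT); rewrite leqNgt rm.
Qed.

Lemma fs_none : first_success c k w = None ->
  forall r, (0 < r)%N -> (k r w < c r w)%N.
Proof.
rewrite /first_success; case: pselect => // H _ r r0.
rewrite ltnNge; apply/negP => hr; apply: H; exists r; by rewrite r0.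
Qed.

Lemma fs_eq g : (0 < g)%N -> (c g w <= k g w)%N ->
  (forall r, (0 < r)%N -> (r < g)%N -> (k r w < c r w)%N) ->
  first_success c k w = Some g.
Proof.
move=> g0 hg hlt; rewrite /first_success; case: pselect => H; last first.
  by exfalso; apply: H; exists g; rewrite g0.
congr Some; case: ex_minnP => m /andP[m0 hm] minm.
apply/eqP; rewrite eqn_leq minm ?g0 //= leqNgt; apply/negP => mg.
by have := hlt m m0 mg; rewrite ltnNge hm.
Qed.

Lemma fs_eqN : (forall r, (0 < r)%N -> (k r w < c r w)%N) ->
  first_success c k w = None.
Proof.
move=> h; rewrite /first_success; case: pselect => [H|//]; exfalso; case: H => r /andP[r0 hr].
by have := h r r0; rewrite ltnNge hr.
Qed.
End Det.

Lemma fs_step (T : Type) (c k : nat -> T -> nat) w :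
  first_success c k w =
  if (c 1%N w <= k 1%N w)%N then Some 1%N
  else omap succn (first_success (fun r => c r.+1) (fun r => k r.+1) w).
Proof.
case: ifP => h.
  by apply: fs_eq => // r r0 r1; move: r0; rewrite leqNgt r1.
case E: (first_success (fun r => c r.+1) (fun r => k r.+1) w) => [g|] /=.
  have [g0 hg hlt] := fs_some E.
  apply: fs_eq => // r r0 rg.
  case: r r0 rg => // -[|r] _ rg; first by rewrite ltnNge h.
  exact: hlt.
have hlt := fs_none E.
apply: fs_eqN => -[|[|r]] // _; first by rewrite ltnNge h.
exact: hlt.
Qed.

Lemma rd_step (T : Type) (c k : nat -> T -> nat) w :
  reset_decomposition c k w =
  if (c 1%N w <= k 1%N w)%N then Some (c 1%N w)
  else omap (addn (k 1%N w).+1)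
         (reset_decomposition (fun r => c r.+1) (fun r => k r.+1) w).
Proof.
rewrite /reset_decomposition fs_step; case: ifP => h /=.
  by rewrite big_geq.
case E: (first_success (fun r => c r.+1) (fun r => k r.+1) w) => [g|] //=.
have [g0 _ _] := fs_some E.
by congr Some; rewrite big_ltn ?ltnS // big_add1 /= addnA.
Qed.
Section Prob.
Variables (R : realType) (n : nat) (rho : R) (p : 'I_n -> R)
  (d : measure_display) (T : measurableType d) (P : probability T R)
  (C K : nat -> T -> nat).
Hypotheses (mC : forall r, measurable_fun setT (C r))
  (mK : forall r, measurable_fun setT (K r))
  (lawC : forall r c, (0 < r)%N -> P (C r @^-1` [set c]) = (C_law (1 - rho) p c)%:E)
  (lawK : forall r k, (0 < r)%N -> P (K r @^-1` [set k]) = (rho * (1 - rho) ^+ k)%:E)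
  (hind : pairs_mutually_independent P C K)
  (hi2 : forall r, (0 < r)%N -> indep2 P (C r) (K r))
  (hrho : 0 < rho < 1).

Local Notation q := (1 - rho).

Lemma mpre (X : T -> nat) (A : set nat) : measurable_fun setT X ->
  measurable (X @^-1` A).
Proof. by move=> mX; rewrite -[X in measurable X]setTI; apply: mX. Qed.

Lemma P_lt (X : T -> nat) t : measurable_fun setT X ->
  P (X @^-1` [set x | (x < t)%N]) = \sum_(k < t) P (X @^-1` [set (k : nat)]).
Proof.
move=> mX; elim: t => [|t IH].
  rewrite big_ord0; have -> : X @^-1` [set x | (x < 0)%N] = set0.
    by apply/seteqP; split => x //=.
  exact: measure0.
have -> : X @^-1` [set x | (x < t.+1)%N] =
   X @^-1` [set x | (x < t)%N] `|` X @^-1` [set t].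
  apply/seteqP; split => x /=.
    case: (ltngtP (X x) t) => [xt _|tx|->]; [by left| |by right].
    by rewrite ltnS leqNgt tx.
  by case => [h|->]; rewrite ltnS ?leqnn // ltnW.
rewrite measureU; [by rewrite big_ord_recr /= IH|exact: mpre|exact: mpre|].
apply/seteqP; split => x //= [h1 h2]; by move: h1; rewrite h2 ltnn.
Qed.

Lemma geom t : \sum_(k < t) rho * q ^+ k = 1 - q ^+ t.
Proof.
elim: t => [|t IH]; first by rewrite big_ord0 expr0 subrr.
by rewrite big_ord_recr /= IH exprS; ring.
Qed.

Lemma P_Kge r t : (0 < r)%N -> P (K r @^-1` [set k | (t <= k)%N]) = (q ^+ t)%:E.
Proof.
move=> r0.
have -> : K r @^-1` [set k | (t <= k)%N] = ~` (K r @^-1` [set k | (k < t)%N]).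
  by apply/seteqP; split => x /=; case: leqP.

rewrite probability_setC; last exact: mpre.
rewrite P_lt //.
under eq_bigr do rewrite lawK //.
by rewrite sumEFin geom -EFinB opprB addrC subrK.
Qed.

Lemma P_Cle r k : (0 < r)%N ->
  P (C r @^-1` [set c | (c <= k)%N]) = (\sum_(c < k.+1) C_law q p c)%:E.
Proof.
move=> r0.
have -> : [set c | (c <= k)%N] = [set c | (c < k.+1)%N] by [].
rewrite P_lt // -sumEFin.
by apply: eq_bigr => c _; rewrite lawC.
Qed.

Lemma P_Cgt r k : (0 < r)%N ->
  P (C r @^-1` [set c | (k < c)%N]) = (1 - \sum_(c < k.+1) C_law q p c)%:E.
Proof.
move=> r0.
have -> : C r @^-1` [set c | (k < c)%N] = ~` (C r @^-1` [set c | (c <= k)%N]).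
  by apply/seteqP; split => x /=; case: leqP.
by rewrite probability_setC ?P_Cle // ; exact: mpre.
Qed.


Definition pr r (A : set (nat * nat)) := (fun w => (C r w, K r w)) @^-1` A.
Definition cyl (s : seq nat) (A : nat -> set (nat * nat)) :=
  \bigcap_(r in [set r | r \in s]) pr r (A r).

Lemma cyl_nil A : cyl [::] A = setT.
Proof. by apply/seteqP; split => w //= _ r. Qed.

Lemma P_cyl s A : uniq s -> all (fun r => (0 < r)%N) s ->
  P (cyl s A) = (\prod_(r <- s) P (pr r (A r)))%E.
Proof. exact: hind. Qed.

Definition upd (A : nat -> set (nat * nat)) m A' :=
  fun r => if r == m then A' else A r.

Lemma cyl_cons s A m A' : m \notin s ->
  cyl (m :: s) (upd A m A') = cyl s A `&` pr m A'.
Proof.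
move=> ms; apply/seteqP; split => w /=.
  move=> H; split.
    move=> r rs; have := H r; rewrite /= inE rs orbT /upd => /(_ isT).
    by case: eqP => // rm; move: ms; rewrite -rm rs.
  by have := H m; rewrite /= inE eqxx /upd eqxx => /(_ isT).
move=> [H1 H2] r /=; rewrite inE /upd; case: eqP => [-> //|_ /= rs].
exact: H1.
Qed.

Lemma P_cyl_cons s A m A' : uniq s -> all (fun r => (0 < r)%N) s ->
  m \notin s -> (0 < m)%N ->
  P (cyl s A `&` pr m A') = (P (cyl s A) * P (pr m A'))%E.
Proof.
move=> us ps ms m0.
rewrite -cyl_cons // P_cyl /= ?ms ?us ?m0 // big_cons P_cyl // muleC.
rewrite {2}/upd eqxx; congr (_ * _)%E.
apply: eq_big_seq => r rs; rewrite /upd; case: eqP => // rm.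
by move: ms; rewrite -rm rs.
Qed.

Lemma mpr_CK r (A B : set nat) : measurable (C r @^-1` A `&` K r @^-1` B).
Proof. apply: measurableI; exact: mpre. Qed.

Definition A0 t := [set x : nat * nat | x.1 = t /\ (t <= x.2)%N].
Definition Yk j := [set x : nat * nat | x.2 = j /\ (j < x.1)%N].
Definition Le := [set x : nat * nat | (x.1 <= x.2)%N].
Definition Gt := [set x : nat * nat | (x.2 < x.1)%N].

Lemma prA0 r t : pr r (A0 t) = C r @^-1` [set t] `&` K r @^-1` [set k | (t <= k)%N].
Proof. by []. Qed.
Lemma prYk r j : pr r (Yk j) = K r @^-1` [set j] `&` C r @^-1` [set c | (j < c)%N].
Proof. by []. Qed.
Lemma prGt r : pr r Gt = ~` pr r Le.
Proof. by rewrite /Gt /Le /pr; apply/seteqP; split => w /=; case: leqP. Qed.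

Lemma m_prA0 r t : measurable (pr r (A0 t)).
Proof. rewrite prA0; exact: mpr_CK. Qed.
Lemma m_prYk r j : measurable (pr r (Yk j)).
Proof. rewrite prYk; apply: measurableI; exact: mpre. Qed.

Lemma m_prLe r : measurable (pr r Le).
Proof.
have -> : pr r Le = \bigcup_c (C r @^-1` [set c] `&` K r @^-1` [set k | (c <= k)%N]).
  rewrite /pr /Le; apply/seteqP; split => w /=.
    by move=> h; exists (C r w).
  by move=> [c _ [/= Hc h]]; rewrite Hc.
by apply: bigcupT_measurable => c; apply: measurableI; exact: mpre.
Qed.

Lemma indepE r A B : (0 < r)%N ->
  P (C r @^-1` A `&` K r @^-1` B) = (P (C r @^-1` A) * P (K r @^-1` B))%E.
Proof. move=> r0; exact: hi2. Qed.

Lemma P_prA0 r t : (0 < r)%N -> P (pr r (A0 t)) = (C_law q p t * q ^+ t)%:E.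
Proof. by move=> r0; rewrite prA0 indepE // lawC // P_Kge. Qed.

Lemma P_prYk r j : (0 < r)%N ->
  P (pr r (Yk j)) = (rho * q ^+ j * (1 - \sum_(c < j.+1) C_law q p c))%:E.
Proof. by move=> r0; rewrite prYk setIC indepE // lawK // P_Cgt // -EFinM mulrC. Qed.
Lemma prLe_bigcup r : pr r Le =
  \bigcup_c (C r @^-1` [set c] `&` K r @^-1` [set k | (c <= k)%N]).
Proof.
rewrite /pr /Le; apply/seteqP; split => w /=.
  by move=> h; exists (C r w).
by move=> [c _ [/= Hc h]]; rewrite Hc.
Qed.

Definition Sser := (\sum_(0 <= c <oo) (C_law q p c * q ^+ c)%:E)%E.

Lemma P_prLe r : (0 < r)%N -> P (pr r Le) = Sser.
Proof.
move=> r0; rewrite prLe_bigcup measure_bigcup //=; last first.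
  by move=> i j _ _ [w [[/= Ci _] [/= Cj _]]]; rewrite -Ci -Cj.
  by move=> c _; exact: mpr_CK.
rewrite (@eq_eseriesl _ _ xpredT); last by move=> i; rewrite in_setT.
apply: eq_eseriesr => c _.
by rewrite indepE // lawC // P_Kge // -EFinM.
Qed.


Lemma expect_S : ('E_P[fun w => (q ^+ C 1%N w)%R])%E = Sser.
Proof.
rewrite unlock.
have E : [set: T] = \bigcup_c (C 1%N @^-1` [set c]).
  by apply/seteqP; split => w // _; exists (C 1%N w).
rewrite E ge0_integral_bigcup.
- apply: eq_eseriesr => c _.
  rewrite (eq_integral (fun _ => (q ^+ c)%:E)); last first.
    by move=> w; rewrite inE => ->.
  rewrite integral_cst; last exact: mpre.
  rewrite [X in (_ * X)%E](_ : _ = (C_law q p c)%:E); last exact: lawC.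
  by rewrite -EFinM mulrC.
- by move=> c; exact: mpre.
- move=> _ Y _; apply: measurableI.
    by apply: bigcupT_measurable => c; exact: mpre.
  exact: (@mpre (C 1%N) [set c | Y (q ^+ c)%:E] (mC _)).
- by move=> w _; rewrite lee_fin exprn_ge0 // subr_ge0; case/andP: hrho => _ /ltW.
- by move=> i j _ _ [w [Ci Cj]]; rewrite -Ci -Cj.
Qed.
Lemma shiftE (F : nat -> T -> nat) m :
  (fun r => F (m + r.+1)%N) = (fun r => F (m.+1 + r)%N).
Proof. by apply: funext => r; rewrite addnS addSn. Qed.

Lemma fs_shift m w :
  first_success (fun r => C (m + r)%N) (fun r => K (m + r)%N) w =
  if (C m.+1 w <= K m.+1 w)%N then Some 1%N
  else omap succn (first_success (fun r => C (m.+1 + r)%N) (fun r => K (m.+1 + r)%N) w).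
Proof. by rewrite fs_step /= !addn1 !shiftE. Qed.

Lemma rd_shift m w :
  reset_decomposition (fun r => C (m + r)%N) (fun r => K (m + r)%N) w =
  if (C m.+1 w <= K m.+1 w)%N then Some (C m.+1 w)
  else omap (addn (K m.+1 w).+1)
     (reset_decomposition (fun r => C (m.+1 + r)%N) (fun r => K (m.+1 + r)%N) w).
Proof. by rewrite rd_step /= !addn1 !shiftE. Qed.

Definition Fm m g := [set w | first_success (fun r => C (m + r)%N) (fun r => K (m + r)%N) w = Some g].

Lemma Fm1 m : Fm m 1 = pr m.+1 Le.
Proof.
apply/seteqP; split => w; rewrite /Fm /pr /Le /= (fs_shift m w).
  case: ifP => // h.
  case E: (first_success _ _ w) => [g|] //= [g0].
  by have [] := fs_some E; rewrite g0.
by move=> ->.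
Qed.

Lemma FmS m g : Fm m g.+2 = pr m.+1 Gt `&` Fm m.+1 g.+1.
Proof.
apply/seteqP; split => w; rewrite /Fm /pr /Gt /= (fs_shift m w).
  case: ifP => // h.
  case E: (first_success _ _ w) => [g'|] //= [->]; split => //.
  by rewrite ltnNge h.
move=> [h ->] /=; move: h; rewrite ltnNge; by case: ifP.
Qed.

Lemma s_ok m s : all (fun r => (0 < r <= m)%N) s ->
  [/\ m.+1 \notin s, all (fun r => (0 < r)%N) s &
      all (fun r => (0 < r <= m.+1)%N) (m.+1 :: s)].
Proof.
move=> h; split.
- apply/negP => ms; by have := allP h _ ms; rewrite ltnn andbF.
- by apply: sub_all h => r /andP[].
- rewrite /= leqnn; apply: sub_all h => r /andP[-> /=] /leqW //.
Qed.

Definition sig := fine Sser.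

Lemma Sser_fin : Sser = sig%:E.
Proof.
rewrite /sig -(P_prLe (r := 1%N)) // fineK //.
apply: fin_num_measure; exact: m_prLe.
Qed.

Lemma main1 g : forall m s A, uniq s -> all (fun r => (0 < r <= m)%N) s ->
  measurable (cyl s A) ->
  P (cyl s A `&` Fm m g.+1) = (P (cyl s A) * ((1 - sig) ^+ g * sig)%:E)%E.
Proof.
elim: g => [|g IH] m s A us hs mc; have [ms ps hs'] := s_ok hs.
  by rewrite Fm1 P_cyl_cons // P_prLe // Sser_fin expr0 mul1r.
rewrite FmS setIA -cyl_cons // IH //=; last first.
  by rewrite cyl_cons //; apply: measurableI => //; rewrite prGt; apply: measurableC; exact: m_prLe.
  by rewrite ms us.
rewrite cyl_cons // P_cyl_cons // prGt probability_setC ?m_prLe //.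
rewrite [X in (1 - X)%E](_ : _ = Sser); last exact: P_prLe.
rewrite Sser_fin.
rewrite -muleA -EFinB -EFinM exprS mulrA //.
exact: m_prLe.
Qed.
Definition Em m t := [set w | reset_decomposition (fun r => C (m + r)%N) (fun r => K (m + r)%N) w = Some t].
Definition Um m t j := pr m.+1 (A0 t) `|`
  [set w | (K m.+1 w < j)%N /\ (K m.+1 w < C m.+1 w)%N /\ (K m.+1 w < t)%N /\
           Em m.+1 (t - (K m.+1 w).+1) w].

Lemma Em_U m t : Em m t = Um m t t.
Proof.
apply/seteqP; split => w; rewrite /Em /Um /pr /A0 /= (rd_shift m w).
  case: ifP => h.
    by move=> [<-]; left.
  case E: (reset_decomposition _ _ w) => [x|] //= [<-]; right.
  have KC : (K m.+1 w < C m.+1 w)%N by rewrite ltnNge h.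
  have Kt : (K m.+1 w < (K m.+1 w).+1 + x)%N by rewrite addSn ltnS leq_addr.
  by split => //; split => //; split => //; rewrite addKn.
case => [[Ct tK]|[_ [KC [Kt Ew]]]].
  by rewrite Ct tK.
rewrite leqNgt KC /= Ew /=; congr Some; exact: subnKC.
Qed.

Lemma U0 m t : Um m t 0 = pr m.+1 (A0 t).
Proof.
apply/seteqP; split => w; rewrite /Um /=; last by left.
by case => // -[].
Qed.

Lemma US m t j : (j < t)%N -> Um m t j.+1 = Um m t j `|` (pr m.+1 (Yk j) `&` Em m.+1 (t - j.+1)).
Proof.
move=> jt; apply/seteqP; split => w; rewrite /Um /pr /Yk /=.
  case => [h|[Kj [KC [Kt E]]]]; first by left; left.
  move: Kj; rewrite ltnS leq_eqVlt => /orP[/eqP Kj|Kj].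
    by right; split => //; [split => //; rewrite -Kj | rewrite -Kj].
  by left; right.
case => [[h|[Kj [KC [Kt E]]]]|[[Kj jC] E]]; first by left.
  by right; split => //; rewrite ltnS ltnW.
by right; rewrite Kj.
Qed.
Lemma U_disj m t j : Um m t j `&` (pr m.+1 (Yk j) `&` Em m.+1 (t - j.+1)) = set0.
Proof.
apply/seteqP; split => w //; rewrite /Um /pr /Yk /A0 /=.
case => -[[Ct tK]|[Kj _]] [[Kj' jC] _].
  by move: jC; rewrite Ct -Kj' ltnNge tK.
by move: Kj; rewrite Kj' ltnn.
Qed.

Lemma mUm_gen m t j : (forall t', (t' < t)%N -> forall m, measurable (Em m t')) ->
  (j <= t)%N -> measurable (Um m t j).
Proof.
move=> IH; elim: j => [|j IHj] jt.
  rewrite U0; exact: m_prA0.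
rewrite US //; apply: measurableU; first by apply: IHj; exact: ltnW.
apply: measurableI; first exact: m_prYk.
by apply: IH; rewrite subnSK // leq_subr.
Qed.

Lemma mEm t : forall m, measurable (Em m t).
Proof.
elim/ltn_ind: t => t IH m; rewrite Em_U; exact: mUm_gen.
Qed.

Lemma mUm m t j : (j <= t)%N -> measurable (Um m t j).
Proof. by apply: mUm_gen => t' _ m'; exact: mEm. Qed.

Hypothesis hp : \sum_i p i = 1 - rho.

Definition Vj t j := C_law q p t * q ^+ t +
  \sum_(k < j) rho * q ^+ k * (1 - \sum_(c < k.+1) C_law q p c) * T_law rho p (t - k.+1).

Lemma main2 t : forall m s A, uniq s -> all (fun r => (0 < r <= m)%N) s ->
  measurable (cyl s A) ->
  P (cyl s A `&` Em m t) = (P (cyl s A) * (T_law rho p t)%:E)%E.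
Proof.
elim/ltn_ind: t => t IH m s A us hs mc; have [ms ps hs'] := s_ok hs.
have [pb PB] : exists pb, P (cyl s A) = pb%:E.
  by exists (fine (P (cyl s A))); rewrite fineK //; apply: fin_num_measure.
have key : forall j, (j <= t)%N -> P (cyl s A `&` Um m t j) = (P (cyl s A) * (Vj t j)%:E)%E.
  elim => [|j IHj] jt.
    by rewrite U0 P_cyl_cons // P_prA0 // /Vj big_ord0 addr0.
  rewrite US // setIUr measureU; first last.
  - apply/seteqP; split => w // [[_ h1] [_ h2]].
    have : (Um m t j `&` (pr m.+1 (Yk j) `&` Em m.+1 (t - j.+1))) w by [].
    by rewrite U_disj.
  - apply: measurableI => //; apply: measurableI; [exact: m_prYk|exact: mEm].
  - by apply: measurableI => //; apply: mUm; exact: ltnW.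
  rewrite [X in (X + _)%E](_ : _ = (P (cyl s A) * (Vj t j)%:E)%E); last exact: IHj (ltnW jt).
  rewrite [X in (_ + X)%E](_ : _ = P (cyl s A `&` (pr m.+1 (Yk j) `&` Em m.+1 (t - j.+1)))) //.
  rewrite setIA -cyl_cons // IH //; last first.
  - by rewrite cyl_cons //; apply: measurableI => //; exact: m_prYk.
  - by rewrite /= ms us.
  - by rewrite subnSK // leq_subr.
  rewrite cyl_cons // P_cyl_cons // P_prYk // PB.
  rewrite -!EFinM -EFinD /Vj [in RHS]big_ord_recr /=; congr (_%:E); ring.
rewrite Em_U key // PB /Vj; congr (_ * _)%:E%E.
rewrite [RHS]T_law_rec //; last by rewrite subr_eq0; case/andP: hrho => _ /gt_eqF ->.
rewrite mulrC; congr (_ + _); apply: eq_bigr => k _; by rewrite !mulrA.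
Qed.
End Prob.

Unset Implicit Arguments.

Theorem mainTheorem12 (R : realType) (n : nat) (rho : R) (p : 'I_n -> R)
  (d : measure_display) (T : measurableType d) (P : probability T R)
  (C K : nat -> T -> nat) :
  (0 < n)%N ->
  0 < rho < 1 ->
  (forall i, 0 < p i) ->
  \sum_(i < n) p i = 1 - rho ->
  (forall r, measurable_fun setT (C r)) ->
  (forall r, measurable_fun setT (K r)) ->
  (forall r c, (0 < r)%N -> P (C r @^-1` [set c]) = (C_law (1 - rho) p c)%:E) ->
  (forall r k, (0 < r)%N -> P (K r @^-1` [set k]) = (rho * (1 - rho) ^+ k)%:E) ->
  pairs_mutually_independent P C K ->
  (forall r, (0 < r)%N -> indep2 P (C r) (K r)) ->
  let s := ('E_P[fun w => ((1 - rho) ^+ C 1%N w)%R])%E in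
  (forall g, (0 < g)%N ->
     P [set w | first_success C K w = Some g] = ((1 - s) ^+ g.-1 * s)%E) /\
  (forall t, P [set w | reset_decomposition C K w = Some t]
             = (T_law rho p t)%:E).
Proof.
move=> n0 hrho hp0 hp mC mK lawC lawK hind hi2 s.
have mc0 : measurable (cyl C K [::] (fun _ => set0)) by rewrite cyl_nil.
split.
- case => [|g] // _ /=.
  have := main1 mC mK lawC lawK hind hi2 g (m:=0) (s:=[::]) (A:=fun _ => set0) isT isT mc0.
  rewrite cyl_nil setTI probability_setT mul1e.
  have -> : [set w | first_success C K w = Some g.+1] = Fm C K 0 g.+1 by [].
  move=> ->; rewrite /s (expect_S mC lawC hrho) (Sser_fin mC mK lawC lawK hi2).
  by rewrite -EFinB -EFin_expe -EFinM.
- move=> t.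
  have := main2 mC mK lawC lawK hind hi2 hrho hp t (m:=0) (s:=[::]) (A:=fun _ => set0) isT isT mc0.
  rewrite cyl_nil setTI probability_setT mul1e.
  by have -> : [set w | reset_decomposition C K w = Some t] = Em C K 0 t by [].
Qed.
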